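(* Let $G=(V,E,T,c)$ be a $k$-terminal network and let $S\subset T$ with $S\neq\emptyset,T$. Then for every connected component $C\in CC(E_S)$, the boundary $\delta(C)$ is the minimum cutset separating the terminals $T\cap C$ from $T\setminus C$, i.e. $\delta(C)=E_{T\cap C}$.
   Context: A $k$-terminal network $G=(V,E,T,c)$ is a finite connected undirected graph $(V,E)$ with edge weights (capacities) $c:E\to\mathbb{R}_{>0}$ and a set $T\subseteq V$ of $|T|=k$ terminals. For $F\subseteq E$ let $c(F)=\sum_{e\in F}c(e)$; for $W\subseteq V$ let $\delta(W)$ be the set of edges with exactly one endpoint in $W$. For $S\subset T$ with $S\neq\emptyset,T$, write $\bar S=T\setminus S$; a cut $(W,V\setminus W)$ is $S$-separating if $W\cap T\in\{S,\bar S\}$, and $\mathrm{mincut}_G(S)$ is the minimum of $c(\delta(W))$ over all $S$-separating cuts. It is assumed (e.g. by a generic perturbation of the weights) that the minimizing cutset is unique; it is denoted $E_S$ (so $E_S=E_{\bar S}$). For $F\subseteq E$, $CC(F)$ denotes the set of vertex sets of connected components of $(V,E\setminus F)$. (Each component of $CC(E_S)$ contains at least one terminal and $|CC(E_S)|\ge 2$, so $T\cap C$ is a nonempty proper subset of $T$.) *)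

(* Defs.v *)
From HB Require Import structures.
From mathcomp Require Import all_boot all_order all_algebra.
Set Implicit Arguments. Unset Strict Implicit. Unset Printing Implicit Defensive.
Import Order.TTheory GRing.Theory Num.Theory.
Local Open Scope ring_scope.

(* A k-terminal network on a finite vertex type V:
   - E : {set {set V}} is the edge set, each edge being a 2-element vertex set
     (finite undirected simple graph);
   - c : {set V} -> R gives the capacities (only relevant on E);
   - T : {set V} is the terminal set (k = #|T|). *)

Definition is_network (R : realFieldType) (V : finType)
  (E : {set {set V}}) (T : {set V}) (c : {set V} -> R) : Prop :=
  (forall e, e \in E -> #|e| = 2%N) /\
  (forall e, e \in E -> 0 < c e).

Definition adj (V : finType) (E F : {set {set V}}) : rel V :=
  fun x y => [set x; y] \in E :\: F.

Definition connected_graph (V : finType) (E : {set {set V}}) : Prop :=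
  forall x y : V, connect (adj E set0) x y.

Definition delta (V : finType) (E : {set {set V}}) (W : {set V}) : {set {set V}} :=
  [set e in E | #|e :&: W| == 1%N].

Definition capa (R : realFieldType) (V : finType) (c : {set V} -> R)
  (F : {set {set V}}) : R :=
  \sum_(e in F) c e.

Definition CC (V : finType) (E F : {set {set V}}) : {set {set V}} :=
  [set [set y | connect (adj E F) x y] | x in [set: V]].

Definition separating (V : finType) (T S W : {set V}) : bool :=
  (W :&: T == S) || (W :&: T == T :\: S).

Definition proper_terminal_subset (V : finType) (T S : {set V}) : bool :=
  [&& S \subset T, S != set0 & S != T].

Definition is_min_cutset (R : realFieldType) (V : finType)
  (E : {set {set V}}) (T : {set V}) (c : {set V} -> R)
  (S : {set V}) (F : {set {set V}}) : Prop :=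
  (exists W : {set V}, separating T S W /\ F = delta E W) /\
  (forall W : {set V}, separating T S W -> capa c F <= capa c (delta E W)).

Definition unique_min_cuts (R : realFieldType) (V : finType)
  (E : {set {set V}}) (T : {set V}) (c : {set V} -> R) : Prop :=
  forall S : {set V}, proper_terminal_subset T S ->
    forall F1 F2, is_min_cutset E T c S F1 -> is_min_cutset E T c S F2 -> F1 = F2.

(* Main.v *)
Require Import Defs.
From HB Require Import structures.
From mathcomp Require Import all_boot all_order all_algebra.
Import Order.TTheory GRing.Theory Num.Theory.
Local Open Scope ring_scope.
Set Implicit Arguments. Unset Strict Implicit.

Lemma pair_card (V : finType) (x y : V) (A : {set V}) :
  x != y -> (#|[set x; y] :&: A| == 1%N) = ((x \in A) != (y \in A)).
Proof.
move=> xy; have yx : y != x by rewrite eq_sym.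
case hx: (x \in A); case hy: (y \in A) => /=;
[ have -> : [set x; y] :&: A = [set x; y]
| have -> : [set x; y] :&: A = [set x]
| have -> : [set x; y] :&: A = [set y]
| have -> : [set x; y] :&: A = set0 ];
try (apply/setP=> z; rewrite !inE; case: (eqVneq z x) => [->|zx];
  rewrite ?eqxx ?hx ?hy ?(negbTE xy) ?orbT //=; case: (eqVneq z y) => [->|zy];
  rewrite ?eqxx ?hx ?hy ?(negbTE yx) ?andbF ?andbT //=);
by rewrite ?cards2 ?xy ?cards1 ?cards0.
Qed.

Lemma in_delta (V : finType) (E : {set {set V}}) (A : {set V}) (x y : V) :
  x != y -> ([set x; y] \in delta E A) = ([set x; y] \in E) && ((x \in A) != (y \in A)).
Proof. by move=> xy; rewrite /delta inE pair_card. Qed.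

Lemma delta_sub (V : finType) (E : {set {set V}}) (A : {set V}) : delta E A \subset E.
Proof. by apply/subsetP=> e; rewrite inE => /andP[]. Qed.

Lemma capa_sub (R : realFieldType) (V : finType) (E : {set {set V}}) (c : {set V} -> R)
  (hc : forall e, e \in E -> 0 <= c e) (A B : {set {set V}}) :
  A \subset B -> B \subset E -> capa c A <= capa c B.
Proof.
move=> AB BE; rewrite /capa [X in _ <= X](big_setID A) /= (setIidPr AB) lerDl.
apply: sumr_ge0 => e; rewrite inE => /andP[_ eB]; apply: hc; exact: (subsetP BE).
Qed.

Lemma capa_U (R : realFieldType) (V : finType) (E : {set {set V}}) (c : {set V} -> R)
  (hc : forall e, e \in E -> 0 <= c e) (A B : {set {set V}}) :
  A \subset E -> B \subset E -> capa c (A :|: B) <= capa c A + capa c B.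
Proof.
move=> AE BE; rewrite {1}/capa (big_setID A) /=.
have -> : (A :|: B) :&: A = A by apply/setIidPr; exact: subsetUl.
rewrite lerD2l; apply: (@capa_sub _ _ E c hc) => //.
by apply/subsetP=> e; rewrite !inE => /andP[eA /orP[]] //; rewrite (negbTE eA).
Qed.

Lemma delta_C (V : finType) (E : {set {set V}})
  (hE : forall e, e \in E -> exists x y, x != y /\ e = [set x; y]) (A : {set V}) :
  delta E (~: A) = delta E A.
Proof.
apply/setP=> e; case eE: (e \in E); last by rewrite /delta !inE eE.
have [x [y [xy ->]]] := hE e eE.
by rewrite !in_delta // !inE; case: (x \in A); case: (y \in A).
Qed.

Lemma key (V : finType) (E : {set {set V}})
  (hE : forall e, e \in E -> exists x y, x != y /\ e = [set x; y]) (W0 C W : {set V}) :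
  C \subset W0 -> delta E C \subset delta E W0 ->
  delta E ((W0 :\: C) :|: W) \subset ((delta E W0 :\: delta E C) :|: delta E W).
Proof.
move=> CW0 dC; apply/subsetP=> e he.
have eE : e \in E by move: he; rewrite inE => /andP[].
have [x [y [xy ee]]] := hE e eE; subst e.
have hCW := subsetP dC [set x; y].
have hx := subsetP CW0 x; have hy := subsetP CW0 y.
move: he hCW hx hy; rewrite !inE !pair_card // eE !inE /=.
case: (x \in C); case: (y \in C); case: (x \in W0); case: (y \in W0);
  case: (x \in W); case: (y \in W) => //=; move=> ? ? h1 h2; try (by have := h1 erefl);
  try (by have := h2 erefl); by [].
Qed.

Lemma trace (V : finType) (T W0 C W : {set V}) :
  C \subset W0 -> W :&: T = C :&: T -> ((W0 :\: C) :|: W) :&: T = W0 :&: T.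
Proof.
move=> CW0 /setP hW; apply/setP=> t; have := hW t; have := subsetP CW0 t.
rewrite !inE; case: (t \in T); rewrite ?andbT ?andbF //.
by move=> h ->; case: (t \in C) h => /= [->//|_]; rewrite orbF.
Qed.

Lemma sep_C (V : finType) (T S W : {set V}) :
  S \subset T -> separating T S W -> separating T S (~: W).
Proof.
move=> ST; rewrite /separating => /orP[] /eqP /setP h; apply/orP; [right|left];
apply/eqP/setP=> t; have := h t; have := subsetP ST t; rewrite !inE;
case: (t \in T); case: (t \in S); case: (t \in W) => //= h1; by have := h1 erefl.
Qed.

Lemma delta0 (V : finType) (E : {set {set V}}) : delta E set0 = set0.
Proof. by apply/setP=> e; rewrite /delta !inE setI0 cards0 andbF. Qed.

Lemma core (R : realFieldType) (V : finType) (E : {set {set V}}) (T : {set V})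
  (c : {set V} -> R)
  (hE : forall e, e \in E -> exists x y, x != y /\ e = [set x; y])
  (hc : forall e, e \in E -> 0 < c e) (Hconn : connected_graph E)
  (S : {set V}) (HS : proper_terminal_subset T S) (W0 : {set V})
  (sepW0 : separating T S W0)
  (Hmin : forall W, separating T S W -> capa c (delta E W0) <= capa c (delta E W))
  (C : {set V}) (x : V) (xC : x \in C) (CW0 : C \subset W0)
  (dC : delta E C \subset delta E W0) :
  proper_terminal_subset T (T :&: C) /\ is_min_cutset E T c (T :&: C) (delta E C).
Proof.
have hc0 : forall e, e \in E -> 0 <= c e by move=> e /hc /ltW.
have notT : ~~ (T \subset W0).
  apply/negP => TW0; move: sepW0; rewrite /separating (setIidPr TW0).
  move/and3P: HS => [ST S0 ST']; case/orP => /eqP h.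
    by rewrite -h eqxx in ST'.
  have [s sS] := set0Pn _ S0.
  have : s \in T :\: S by rewrite -h (subsetP ST).
  by rewrite inE sS.
have capa_ineq : forall W, W :&: T = C :&: T ->
    capa c (delta E C) <= capa c (delta E W).
  move=> W hW; set W' := (W0 :\: C) :|: W.
  have sepW' : separating T S W' by rewrite /separating /W' (trace CW0 hW).
  have h1 := Hmin _ sepW'.
  have h2 : capa c (delta E W') <= capa c (delta E W0 :\: delta E C) + capa c (delta E W).
    apply: le_trans (capa_U hc0 _ _); last 2 first.
    - exact: subset_trans (subsetDl _ _) (delta_sub _ _).
    - exact: delta_sub.
    apply: (@capa_sub _ _ E c hc0); first exact: (@key _ _ hE _ _ _ CW0 dC).
    rewrite subUset delta_sub andbT.
    exact: subset_trans (subsetDl _ _) (delta_sub _ _).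
  have h3 : capa c (delta E W0) = capa c (delta E C) + capa c (delta E W0 :\: delta E C).
    by rewrite /capa (big_setID (delta E C)) /= (setIidPr dC).
  rewrite h3 in h1; have := le_trans h1 h2.
  by rewrite [X in _ <= X]addrC lerD2r.
have TC0 : T :&: C != set0.
  apply/negP => /eqP TC0.
  have := capa_ineq set0; rewrite delta0 set0I setIC TC0 => /(_ erefl) hle.
  have dC0 : delta E C = set0.
    apply/eqP/set0Pn => [[e eC]].
    have ce : c e <= capa c (delta E C).
      have -> : c e = capa c [set e] by rewrite /capa big_set1.
      apply: (@capa_sub _ _ E c hc0); first by rewrite sub1set.
      exact: delta_sub.
    have eE : e \in E by apply: (subsetP (delta_sub E C)).
    have := hc e eE; have := le_trans ce hle; rewrite /capa big_set0.
    by move=> h1 h2; have := lt_le_trans h2 h1; rewrite ltxx.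
  have step : forall u v, u \in C -> adj E set0 u v -> v \in C.
    move=> u v uC; rewrite /adj setD0 => uvE.
    have [<-|uv] := eqVneq u v; first by [].
    apply/negPn/negP => vC.
    have : [set u; v] \in delta E C by rewrite in_delta // uvE uC vC.
    by rewrite dC0 inE.
  have CT : C = setT.
    apply/setP=> y; rewrite inE.
    have /connectP[p pth ->] := Hconn x y.
    elim: p x xC pth => //= z p IH u uC /andP[uz pth].
    exact: IH (step _ _ uC uz) pth.
  by move: notT; rewrite (subset_trans _ CW0) // CT subsetT.
have TCT : T :&: C != T.
  apply/negP => /eqP /setIidPl TC.
  by move: notT; rewrite (subset_trans TC CW0).
split; first by rewrite /proper_terminal_subset subsetIl TC0 TCT.
split.
  by exists C; split => //; rewrite /separating setIC eqxx.
move=> W; case/orP => /eqP h.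
  by apply: capa_ineq; rewrite h setIC.
rewrite -(delta_C hE W); apply: capa_ineq.
apply/setP=> t; move/setP/(_ t): h; rewrite !inE.
by case: (t \in T); case: (t \in C); case: (t \in W) => //= ->.
Qed.

Unset Implicit Arguments.

Theorem lemma2p3 (R : realFieldType) (V : finType)
  (E : {set {set V}}) (T : {set V}) (c : {set V} -> R) :
  is_network E T c -> connected_graph E -> unique_min_cuts E T c ->
  forall S : {set V}, proper_terminal_subset T S ->
  forall ES : {set {set V}}, is_min_cutset E T c S ES ->
  forall C : {set V}, C \in CC E ES ->
    proper_terminal_subset T (T :&: C) /\
    is_min_cutset E T c (T :&: C) (delta E C).
Proof.
move=> [Hcard hc] Hconn _ S HS ES [[W0 [sepW0 ->]] Hmin] C HC.
have hE : forall e, e \in E -> exists x y, x != y /\ e = [set x; y].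
  by move=> e /Hcard /eqP /cards2P.
case/imsetP: HC => x _ ->.
set C0 := [set y | connect (adj E (delta E W0)) x y].
have xC : x \in C0 by rewrite inE connect0.
have side0 : forall u y, connect (adj E (delta E W0)) u y -> (y \in W0) = (u \in W0).
  move=> u0 y /connectP[p pth ->].
  elim: p u0 pth => //= z p IH u /andP[uz pth].
  rewrite (IH _ pth).
  move: uz; rewrite /adj inE => /andP[uzn uzE].
  have [<-|uv] := eqVneq u z; first by [].
  move: uzn; rewrite in_delta // uzE /=.
  by case: (u \in W0); case: (z \in W0).
have side : forall y, y \in C0 -> (y \in W0) = (x \in W0).
  by move=> y; rewrite inE => /side0.
have step : forall u v, u \in C0 -> [set u; v] \in E :\: delta E W0 -> v \in C0.
  move=> u v xu uv; rewrite inE; rewrite inE in xu.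
  by apply: connect_trans xu (connect1 _).
have dC : delta E C0 \subset delta E W0.
  apply/subsetP=> e he.
  have eE : e \in E by apply: (subsetP (delta_sub E C0)).
  have [u [v [uv ee]]] := hE e eE; subst e.
  apply/negPn/negP => hn.
  move: he; rewrite in_delta // eE /=.
  have h1 : [set u; v] \in E :\: delta E W0 by rewrite inE hn eE.
  have h2 : [set v; u] \in E :\: delta E W0 by rewrite setUC.
  case uC: (u \in C0); case vC: (v \in C0) => //=.
    by rewrite (step _ _ uC h1) in vC.
  by rewrite (step _ _ vC h2) in uC.
case xW0: (x \in W0).
  apply: (core hE hc Hconn HS sepW0 Hmin xC _ dC).
  by apply/subsetP=> y /side; rewrite xW0.
have sepC : separating T S (~: W0).
  by apply: sep_C => //; case/and3P: HS.
apply: (core hE hc Hconn HS sepC _ xC).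
- by move=> W; rewrite delta_C //; apply: Hmin.
- by apply/subsetP=> y /side; rewrite inE xW0 => ->.
- by rewrite delta_C.
Qed.
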